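(* (a) For every integer $n \geq 4$, $8\left\lfloor \frac{n}{10} \right\rfloor + c(n_{10}) \leq \gamma_{b,2}(P_4 \square P_n)$, where $n_{10} \in \{0,1,\dots,9\}$ is the least residue of $n$ modulo $10$ and $c(0)=0$, $c(1)=2$, $c(2)=2$, $c(3)=3$, $c(4)=4$, $c(5)=5$, $c(6)=5$, $c(7)=6$, $c(8)=7$, $c(9)=8$. (b) For every integer $n \geq 4$ with $n \equiv 1, 4, 5,$ or $9 \pmod{10}$, equality holds: $\gamma_{b,2}(P_4 \square P_n) = 8\left\lfloor \frac{n}{10} \right\rfloor + c(n_{10})$.
   Context: For a graph $G$, a $2$-limited broadcast is a function $f: V(G) \to \{0,1,2\}$. A vertex $u$ hears the broadcast from $v$ if $f(v) > 0$ and $d(u,v) \leq f(v)$, where $d$ is the distance in $G$. The broadcast $f$ is dominating if every vertex of $G$ hears the broadcast from some vertex. The cost of $f$ is $\sum_{v \in V(G)} f(v)$. The $2$-limited broadcast domination number $\gamma_{b,2}(G)$ is the minimum cost of a $2$-limited dominating broadcast on $G$. $P_n$ denotes the path on $n$ vertices and $\square$ the Cartesian product of graphs. *)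

(* Defs.v *)
From mathcomp Require Import all_boot.
Set Implicit Arguments. Unset Strict Implicit. Unset Printing Implicit Defensive.

Definition path_adj (n : nat) : rel 'I_n :=
  fun i j => (i.+1 == j :> nat) || (j.+1 == i :> nat).

Definition cart_adj (T1 T2 : finType) (a1 : rel T1) (a2 : rel T2) : rel (T1 * T2)%type :=
  fun u v => ((u.1 == v.1) && a2 u.2 v.2) || (a1 u.1 v.1 && (u.2 == v.2)).

(* d(u,v) <= k in the graph (T, adj): there is a walk of length <= k. *)
Fixpoint within (T : finType) (adj : rel T) (k : nat) (u v : T) : bool :=
  if k is k'.+1 then (u == v) || [exists w, adj u w && within adj k' w v]
  else u == v.

Definition broadcast (T : finType) := {ffun T -> 'I_3}.

Definition hears (T : finType) (adj : rel T) (f : broadcast T) (u v : T) : bool :=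
  (0 < f v) && within adj (f v) u v.

Definition dominating (T : finType) (adj : rel T) (f : broadcast T) : bool :=
  [forall u, exists v, hears adj f u v].

Definition cost (T : finType) (f : broadcast T) : nat := \sum_(v : T) (f v : nat).

(* gamma_{b,2}(G): minimum cost of a dominating 2-limited broadcast.
   The default 2*|V| is never reached below it: the all-1 broadcast is
   dominating with cost |V|. *)
Definition gamma_b2 (T : finType) (adj : rel T) : nat :=
  \big[minn/(2 * #|T|)]_(f : broadcast T | dominating adj f) cost f.

Definition grid_adj (n : nat) : rel ('I_4 * 'I_n)%type := cart_adj (@path_adj 4) (@path_adj n).

Definition c_tab (r : nat) : nat :=
  nth 0 [:: 0; 2; 2; 3; 4; 5; 5; 6; 7; 8] r.

(* Main.v *)
Require Import Defs.
From mathcomp Require Import all_boot zify.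
Set Implicit Arguments. Unset Strict Implicit. Unset Printing Implicit Defensive.

Definition ndist (x y : nat) := (x - y) + (y - x).
Definition gdist n (u v : 'I_4 * 'I_n) := ndist u.1 v.1 + ndist u.2 v.2.

Lemma grid_adjE n (u w : 'I_4 * 'I_n) : grid_adj u w =
  ((u.1 == w.1 :> nat) && ((u.2.+1 == w.2 :> nat) || (w.2.+1 == u.2 :> nat))) ||
  (((u.1.+1 == w.1 :> nat) || (w.1.+1 == u.1 :> nat)) && (u.2 == w.2 :> nat)).
Proof. by []. Qed.

Lemma within_grid n k (u v : 'I_4 * 'I_n) :
  within (@grid_adj n) k u v = (gdist u v <= k).
Proof.
case: v => [e g].
elim: k u => [|k IH] u /=.
  rewrite leqn0 /gdist /ndist; apply/idP/idP.
    by case: u => [a b] /eqP [-> ->]; rewrite !subnn.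
  case: u => [a b] /= H; apply/eqP; congr pair; apply/val_inj => /=; lia.
apply/idP/idP.
  case/orP => [/eqP->|/existsP [w /andP [Ha Hw]]].
    by rewrite /gdist /ndist !subnn.
  move: Ha Hw; rewrite IH grid_adjE /gdist /ndist.
  case: u w => [a b] [c d] /=.
  move=> /orP [/andP [/eqP H1 /orP [/eqP H2|/eqP H2]]|/andP [/orP [/eqP H1|/eqP H1] /eqP H2]]; lia.
move=> H; case E: (u == (e, g)) => //=; apply/existsP.
move: E H; case: u => [a b]; rewrite /gdist /ndist /= => E H.
have Hne : (a : nat) <> e \/ (b : nat) <> g.
  case: (eqVneq (a : nat) e) => [Ha|Ha]; last by left; apply/eqP.
  right => Hb; move: E; have -> : a = e by apply/val_inj.
  have -> : b = g by apply/val_inj.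
  by rewrite eqxx.
case: (ltngtP b g) => Hbd.
- have Hb' : b.+1 < n by apply: leq_ltn_trans Hbd (ltn_ord g).
  exists (a, Ordinal Hb'); rewrite grid_adjE /= eqxx /= IH /gdist /ndist /=; lia.
- have Hb' : b.-1 < n by apply: leq_ltn_trans (leq_pred _) (ltn_ord b).
  exists (a, Ordinal Hb'); rewrite grid_adjE /= eqxx /= IH /gdist /ndist /=.
  rewrite (_ : b.-1.+1 == b :> nat) ?orbT /=; [lia|apply/eqP; lia].
case: (ltngtP a e) => Hac.
- have Ha' : a.+1 < 4 by apply: leq_ltn_trans Hac (ltn_ord e).
  exists (Ordinal Ha', b); rewrite grid_adjE IH /gdist /ndist /=.
  rewrite !eqxx /= orbT /=; lia.
- have Ha' : a.-1 < 4 by apply: leq_ltn_trans (leq_pred _) (ltn_ord a).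
  exists (Ordinal Ha', b); rewrite grid_adjE IH /gdist /ndist /=.
  rewrite !eqxx andbT (_ : a.-1.+1 == a :> nat) ?orbT /=; [lia|apply/eqP; lia].
exfalso; lia.
Qed.
Lemma sum_pick n x (h : nat -> nat) :
  \sum_(0 <= j < n) ((j == x) * h j) = (x < n) * h x.
Proof.
elim: n => [|n IH]; first by rewrite big_geq.
rewrite big_nat_recr //= IH.
case: (ltngtP x n) => H.
- by rewrite (ltn_trans H (ltnSn n)) mul0n addn0.
- by rewrite (_ : (x < n.+1) = false) ?mul0n //; apply/negbTE; rewrite -leqNgt.
- by rewrite H ltnSn mul0n.
Qed.

Lemma window n c (g : nat -> nat) :
  (forall j, j < n -> (j + 2 < c) || (c + 2 < j) -> g j = 0) ->
  \sum_(0 <= j < n) g j =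
  \sum_(0 <= d < 5) (((2 <= c + d) && (c + d - 2 < n)) * g (c + d - 2)).
Proof.
move=> Hg.
transitivity (\sum_(0 <= j < n) \sum_(0 <= d < 5) ((j + 2 == c + d) * g j)).
  apply: eq_big_nat => j /andP [_ Hj].
  case: (boolP ((j + 2 < c) || (c + 2 < j))) => H.
    by rewrite (Hg j Hj H) big1 // => d _; rewrite muln0.
  rewrite (@eq_big_nat _ _ _ 0 5 _ (fun d => (d == j + 2 - c) * g j)); last first.
    by move=> d _; congr (nat_of_bool _ * _); apply/idP/idP => /eqP E; apply/eqP; lia.
  by rewrite sum_pick (_ : j + 2 - c < 5) ?mul1n //; lia.
rewrite exchange_big_nat; apply: eq_big_nat => d _.
rewrite (@eq_big_nat _ _ _ 0 n _ (fun j => (2 <= c + d) * ((j == c + d - 2) * g j))); last first.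
  move=> j _; rewrite mulnA mulnb; congr (nat_of_bool _ * _).
  case: (leqP 2 (c + d)) => H /=.
    by apply/idP/idP => /eqP E; apply/eqP; lia.
  by apply/negbTE/eqP; lia.
by rewrite -big_distrr /= sum_pick mulnA mulnb.
Qed.
Lemma bigmin_seq_le (I : eqType) (s : seq I) (P : pred I) (F : I -> nat) x i0 :
  i0 \in s -> P i0 -> \big[minn/x]_(i <- s | P i) F i <= F i0.
Proof.
elim: s => [|a s IH] //= Hin HP.
rewrite big_cons; move: Hin; rewrite in_cons => /orP [/eqP <-|Hin].
  by rewrite HP geq_minl.
case: (P a) => /=; last exact: IH.
by apply: leq_trans (geq_minr _ _) _; exact: IH.
Qed.

Lemma bigmin_fin_le (T : finType) (P : pred T) (F : T -> nat) x i0 :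
  P i0 -> \big[minn/x]_(i | P i) F i <= F i0.
Proof. by move=> HP; apply: bigmin_seq_le => //; rewrite mem_index_enum. Qed.

Lemma bigmin_ge (T : finType) (P : pred T) (F : T -> nat) x B :
  B <= x -> (forall i, P i -> B <= F i) -> B <= \big[minn/x]_(i | P i) F i.
Proof.
move=> Hx HF; elim/big_ind: _ => //.
  by move=> a b Ha Hb; rewrite leq_min Ha Hb.
Qed.

Lemma sum_grid n (G : nat -> nat -> nat) :
  \sum_(u : 'I_4 * 'I_n) G u.1 u.2 = \sum_(0 <= j < n) \sum_(0 <= r < 4) G r j.
Proof.
rewrite -(pair_bigA _ (fun (r : 'I_4) (j : 'I_n) => G r j)) /= exchange_big /= big_mkord; apply: eq_bigr => j _.
by rewrite big_mkord.
Qed.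

Lemma hearsE n (f : broadcast ('I_4 * 'I_n)%type) u v :
  hears (@grid_adj n) f u v = (0 < f v) && (gdist u v <= f v).
Proof. by rewrite /hears within_grid. Qed.

Definition wt (r m : nat) : nat :=
  if (r == 0) || (r == 3) then nth 0 [:: 5; 2; 3] m else nth 0 [:: 2; 0; 1] m.
Definition wn n r j := wt r (minn (minn j (n - j.+1)) 2).

Definition Eb (r k a b : nat) : nat :=
  \sum_(0 <= d < 5) (((2 <= a + d) && (d <= b + 2)) *
     \sum_(0 <= r' < 4) ((ndist r' r + ndist d 2 <= k) *
        wt r' (minn (minn (a + d - 2) (b + 2 - d)) 2))).

Definition ballcheck : bool :=
  all (fun r => all (fun k => all (fun a => all (fun b =>
    (a + b < 3) || (Eb r k a b <= 10 * k)) (iota 0 5)) (iota 0 5)) [:: 1; 2]) (iota 0 4).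

Lemma ballcheck_ok : ballcheck.
Proof. rewrite /ballcheck /Eb unlock. vm_compute. reflexivity. Qed.

Lemma ball n r c k : 4 <= n -> c < n -> k <= 2 -> 0 < k -> r < 4 ->
  \sum_(0 <= j < n) \sum_(0 <= r' < 4) ((ndist r' r + ndist j c <= k) * wn n r' j)
  <= 10 * k.
Proof.
move=> Hn Hc Hk2 Hk0 Hr.
rewrite (@window n c); last first.
  move=> j _ Hj; rewrite big1 // => r' _.
  by rewrite (_ : (_ <= k) = false) //; apply/negbTE; rewrite -ltnNge; rewrite /ndist; lia.
rewrite (_ : \sum_(0 <= d < 5) _ = Eb r k (minn c 4) (minn (n - c.+1) 4)); last first.
  apply: eq_big_nat => d /andP [_ Hd].
  have -> : ((2 <= c + d) && (c + d - 2 < n)) =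
            ((2 <= minn c 4 + d) && (d <= minn (n - c.+1) 4 + 2)).
    by apply/idP/idP => /andP [H1 H2]; apply/andP; split; lia.
  case: (boolP ((2 <= minn c 4 + d) && (d <= minn (n - c.+1) 4 + 2))) => Hv; last by rewrite !mul0n.
  congr (_ * _); apply: eq_big_nat => r' _.
  move/andP: Hv => [Hv1 Hv2].
  rewrite (_ : ndist (c + d - 2) c = ndist d 2); last by rewrite /ndist; lia.
  congr (_ * _); rewrite /wn; congr (wt _ _); lia.
have := ballcheck_ok; rewrite /ballcheck => /allP /(_ r); rewrite mem_iota => /(_ Hr).
move=> /allP /(_ k); rewrite !inE => /(_ _) H.
have {H} : all (fun a => all (fun b => (a + b < 3) || (Eb r k a b <= 10 * k)) (iota 0 5)) (iota 0 5).
  by apply: H; apply/orP; lia.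
move=> /allP /(_ (minn c 4)); rewrite mem_iota => /(_ _) H.
have {H} := H ltac:(lia).
move=> /allP /(_ (minn (n - c.+1) 4)); rewrite mem_iota => /(_ _) H.
have {H} := H ltac:(lia).
case/orP => // H; exfalso; lia.
Qed.

Lemma colsum m : m <= 2 -> \sum_(0 <= r < 4) wt r m = nth 0 [:: 14; 4; 8] m.
Proof. by case: m => [|[|[|]]] //= _; rewrite unlock. Qed.

Lemma wsum n : 4 <= n -> \sum_(0 <= j < n) \sum_(0 <= r < 4) wn n r j = 8 * n + 4.
Proof.
move=> Hn.
rewrite (eq_big_nat _ _ (F2 := fun j => nth 0 [:: 14; 4; 8] (minn (minn j (n - j.+1)) 2))); last first.
  by move=> j _; rewrite /wn colsum // geq_minr.
have [p ->] : exists p, n = p + 4 by exists (n - 4); lia.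
rewrite big_ltn; last lia.
rewrite big_ltn; last lia.
rewrite (big_cat_nat (n := p + 2)); [|lia|lia].
rewrite (eq_big_nat _ _ (F1 := fun j => nth 0 [:: 14; 4; 8] (minn (minn j (p + 4 - j.+1)) 2)) (F2 := fun _ => 8)); last first.
  by move=> j Hj; rewrite (_ : minn (minn j (p + 4 - j.+1)) 2 = 2) //; lia.
rewrite sum_nat_const_nat.
rewrite big_ltn; last lia.
rewrite big_ltn; last lia.
rewrite big_geq; last lia.
rewrite (_ : minn (minn 0 (p + 4 - 1)) 2 = 0); last lia.
rewrite (_ : minn (minn 1 (p + 4 - 2)) 2 = 1); last lia.
rewrite (_ : minn (minn (p + 2) (p + 4 - (p + 2).+1)) 2 = 1); last lia.
rewrite (_ : minn (minn (p + 2).+1 (p + 4 - (p + 2).+2)) 2 = 0); last lia.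
rewrite /=; lia.
Qed.

Lemma lower n (f : broadcast ('I_4 * 'I_n)%type) :
  4 <= n -> dominating (@grid_adj n) f -> 8 * n + 4 <= 10 * cost f.
Proof.
move=> Hn /forallP Hd.
rewrite -(wsum Hn) -(sum_grid n (fun r j => wn n r j)).
apply: (@leq_trans (\sum_(u : 'I_4 * 'I_n) \sum_(v : 'I_4 * 'I_n)
                      (hears (@grid_adj n) f u v * wn n u.1 u.2))).
  apply: leq_sum => u _; have [v Hv] := existsP (Hd u).
  by rewrite (bigD1 v) //= Hv mul1n leq_addr.
rewrite exchange_big /cost big_distrr /=; apply: leq_sum => [[r c]] _.
rewrite (eq_bigr (fun u => (0 < f (r, c)) * ((gdist u (r, c) <= f (r, c)) * wn n u.1 u.2))); last first.
  by move=> u _; rewrite hearsE -mulnb mulnA.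
rewrite -big_distrr /=.
case: (posnP (f (r, c))) => Hf; first by rewrite Hf.
rewrite mul1n /gdist /=.
have := sum_grid n (fun r' j => (ndist r' r + ndist j c <= f (r, c)) * wn n r' j).
move=> /= ->.
apply: ball => //.
by rewrite -ltnS ltn_ord.
Qed.

Lemma c_tab_key r : r < 10 -> (10 * c_tab r <= 8 * r + 13) && (c_tab r <= 8).
Proof.
have H : all (fun r => (10 * c_tab r <= 8 * r + 13) && (c_tab r <= 8)) (iota 0 10) by [].
by move=> Hr; move/allP: H => /(_ r); rewrite mem_iota; apply.
Qed.

Lemma arith n x : 8 * n + 4 <= 10 * x -> 8 * (n %/ 10) + c_tab (n %% 10) <= x.
Proof.
move=> H.
have /andP [H1 _] := c_tab_key (ltn_pmod n (isT : 0 < 10)).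
have E := divn_eq n 10.
lia.
Qed.

Lemma partA n : 4 <= n -> 8 * (n %/ 10) + c_tab (n %% 10) <= gamma_b2 (@grid_adj n).
Proof.
move=> Hn; apply: bigmin_ge.
  have /andP [_ H2] := c_tab_key (ltn_pmod n (isT : 0 < 10)).
  rewrite card_prod !card_ord.
  have := leq_div n 10; lia.
by move=> f Hf; apply: arith; apply: lower.
Qed.

Definition Pat (r m : nat) : nat :=
  match r with
  | 0 => if (m == 2) || (m == 6) then 1 else 0
  | 1 => if m == 9 then 2 else 0
  | 2 => if m == 4 then 2 else 0
  | _ => if (m == 1) || (m == 7) then 1 else 0
  end.

Definition Std (r m : nat) (z : bool) : nat := if z && (r == 1) then 1 else Pat r m.

Definition modif (rho r t : nat) : nat :=
  match t with
  | 0 => if rho == 9 then (if r == 1 then 1 else 3)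
         else if rho == 4 then (if r == 2 then 1 else 3)
         else if rho == 5 then (if r == 2 then 0 else if r == 1 then 1 else 3)
         else if rho == 1 then (if r == 1 then 1 else 3) else 3
  | 1 => if (rho == 1) && (r == 1) then 0 else 3
  | 2 => if ((rho == 5) || (rho == 1)) && (r == 3) then 2 else 3
  | 3 => if (rho == 5) && (r == 3) then 0
         else if rho == 1 then (if r == 3 then 0 else if r == 0 then 2 else 3) else 3
  | 4 => if (rho == 1) && (r == 0) then 0 else 3
  | _ => 3
  end.

Definition Fcore (rho r m : nat) (z : bool) (t : nat) : nat :=
  let x := modif rho r (minn t 6) in if x < 3 then x else Std r m z.

Definition T4 : seq (seq nat) := [:: [:: 0; 1; 0; 0]; [:: 0; 0; 0; 1]; [:: 1; 0; 0; 0]; [:: 0; 0; 1; 0]].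
Definition T5 : seq (seq nat) :=
  [:: [:: 0; 0; 1; 0; 0]; [:: 1; 0; 0; 0; 1]; [:: 0; 0; 0; 0; 0]; [:: 0; 0; 2; 0; 0]].

Definition Fn (n r j : nat) : nat :=
  if n == 4 then nth 0 (nth [::] T4 r) j
  else if n == 5 then nth 0 (nth [::] T5 r) j
  else Fcore (n %% 10) r (j %% 10) (j == 0) (n - j.+1).

Lemma nth_le2 (s : seq nat) j : all (fun x => x <= 2) s -> nth 0 s j <= 2.
Proof.
move=> /allP H; case: (ltnP j (size s)) => Hj; first by apply: H; apply: mem_nth.
by rewrite nth_default.
Qed.

Lemma Pat_le2 r m : Pat r m <= 2.
Proof. by case: r => [|[|[|r]]] /=; repeat case: ifP. Qed.

Lemma Fn_le2 n r j : Fn n r j <= 2.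
Proof.
rewrite /Fn; case: ifP => _.
  by apply: nth_le2; rewrite /T4 /T5; case: r => [|[|[|[|r]]]] //=; case: r.
case: ifP => _.
  by apply: nth_le2; rewrite /T4 /T5; case: r => [|[|[|[|r]]]] //=; case: r.
rewrite /Fcore /=; case: ifP => [H|_]; first by rewrite -ltnS.
rewrite /Std; case: ifP => // _; exact: Pat_le2.
Qed.

Definition fb n : broadcast ('I_4 * 'I_n)%type := [ffun u : ('I_4 * 'I_n)%type => inord (Fn n u.1 u.2)].

Lemma fbE n (u : 'I_4 * 'I_n) : (fb n u : nat) = Fn n u.1 u.2.
Proof. by rewrite ffunE inordK // ltnS Fn_le2. Qed.

Lemma dom_of n :
  (forall r c, r < 4 -> c < n -> exists r' c',
     [/\ r' < 4, c' < n, 0 < Fn n r' c' & ndist r r' + ndist c c' <= Fn n r' c']) ->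
  dominating (@grid_adj n) (fb n).
Proof.
move=> H; apply/forallP => [[r c]].
have [r' [c' [H1 H2 H3 H4]]] := H r c (ltn_ord r) (ltn_ord c).
apply/existsP; exists (Ordinal H1, Ordinal H2).
by rewrite hearsE fbE /gdist /= H3 H4.
Qed.

Lemma cost_fb n : cost (fb n) = \sum_(0 <= j < n) \sum_(0 <= r < 4) Fn n r j.
Proof.
rewrite /cost (eq_bigr (fun u : 'I_4 * 'I_n => Fn n u.1 u.2)); last by move=> u _; rewrite fbE.
exact: (sum_grid n (fun r j => Fn n r j)).
Qed.

Definition domcheck n := all (fun r => all (fun c => has (fun r' => has (fun c' =>
   (0 < Fn n r' c') && (ndist r r' + ndist c c' <= Fn n r' c')) (iota 0 n)) (iota 0 4))
   (iota 0 n)) (iota 0 4).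

Lemma domcheck_ok n : domcheck n -> dominating (@grid_adj n) (fb n).
Proof.
move=> H; apply: dom_of => r c Hr Hc.
move/allP: H => /(_ r); rewrite mem_iota => /(_ Hr) /allP /(_ c); rewrite mem_iota => /(_ Hc).
move=> /hasP [r' Hr' /hasP [c' Hc' /andP [H1 H2]]].
move: Hr' Hc'; rewrite !mem_iota /= => Hr' Hc'.
by exists r', c'.
Qed.

Lemma small4 : dominating (@grid_adj 4) (fb 4) /\ cost (fb 4) = 4.
Proof. split; first by apply: domcheck_ok; vm_compute. by rewrite cost_fb unlock. Qed.

Lemma small5 : dominating (@grid_adj 5) (fb 5) /\ cost (fb 5) = 5.
Proof. split; first by apply: domcheck_ok; vm_compute. by rewrite cost_fb unlock. Qed.

Definition valid (a b d : nat) := (2 <= a + d) && (d <= b + 2).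
Definition consistent (rho s a b : nat) :=
  [&& (3 <= a) || (s == a), (8 <= b) || (s == (rho + 19 - b) %% 10)
    & [|| 3 <= a, 8 <= b | 9 <= a + b + 1]].
Definition goodw (rho s a b r d r' : nat) :=
  let v := Fcore rho r' ((s + d + 8) %% 10) (a + d == 2) (b + 2 - d) in
  [&& valid a b d, 0 < v & ndist r r' + ndist d 2 <= v].
Definition gencheck := all (fun rho => all (fun s => all (fun a => all (fun b => all (fun r =>
   ~~ consistent rho s a b || has (fun d => has (fun r' => goodw rho s a b r d r')
     (iota 0 4)) (iota 0 5)) (iota 0 4)) (iota 0 9)) (iota 0 4)) (iota 0 10)) [:: 1; 4; 5; 9].

Lemma gencheck_ok : gencheck.
Proof. vm_compute. reflexivity. Qed.

Lemma shiftF n r' c d : n != 4 -> n != 5 -> c < n -> d < 5 -> 2 <= c + d -> c + d - 2 < n ->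
  Fn n r' (c + d - 2) =
  Fcore (n %% 10) r' ((c %% 10 + d + 8) %% 10) (minn c 3 + d == 2) (minn (n - c.+1) 8 + 2 - d).
Proof.
move=> /negbTE H4 /negbTE H5 Hc Hd H1 H2.
rewrite /Fn H4 H5 /Fcore.
rewrite (_ : minn (n - (c + d - 2).+1) 6 = minn (minn (n - c.+1) 8 + 2 - d) 6); last lia.
rewrite (_ : (c + d - 2) %% 10 = (c %% 10 + d + 8) %% 10); last lia.
rewrite (_ : (c + d - 2 == 0) = (minn c 3 + d == 2)) //.
by apply/idP/idP => /eqP E; apply/eqP; lia.
Qed.

Lemma gen_dom n : 9 <= n -> n %% 10 \in [:: 1; 4; 5; 9] -> dominating (@grid_adj n) (fb n).
Proof.
move=> Hn Hrho; apply: dom_of => r c Hr Hc.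
have Hcons : consistent (n %% 10) (c %% 10) (minn c 3) (minn (n - c.+1) 8).
  rewrite /consistent; apply/and3P; split.
  - case: (leqP 3 (minn c 3)) => //= H; apply/eqP; lia.
  - case: (leqP 8 (minn (n - c.+1) 8)) => //= H; apply/eqP; lia.
  - case: (leqP 3 (minn c 3)) => //= H; case: (leqP 8 (minn (n - c.+1) 8)) => //= H'; lia.
have := gencheck_ok; rewrite /gencheck => /allP /(_ _ Hrho).
move=> /allP /(_ (c %% 10)); rewrite mem_iota => /(_ ltac:(lia)).
move=> /allP /(_ (minn c 3)); rewrite mem_iota => /(_ ltac:(lia)).
move=> /allP /(_ (minn (n - c.+1) 8)); rewrite mem_iota => /(_ ltac:(lia)).
move=> /allP /(_ r); rewrite mem_iota => /(_ ltac:(lia)).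
rewrite Hcons => /orP [//|/hasP [d Hd /hasP [r' Hr' Hg]]].
move: Hd Hr'; rewrite !mem_iota /= => Hd Hr'.
move: Hg; rewrite /goodw /valid => /and3P [/andP [V1 V2] Hpos Hdist].
have H1 : 2 <= c + d by lia.
have H2 : c + d - 2 < n by lia.
exists r', (c + d - 2); split => //.
- by rewrite shiftF //; apply/eqP; lia.
- rewrite shiftF //; try (apply/eqP; lia).
  rewrite (_ : ndist c (c + d - 2) = ndist d 2) //; rewrite /ndist; lia.
Qed.

Lemma periodic (g : nat -> nat) q x :
  \sum_(0 <= j < 10 * q + x) g (j %% 10) =
  q * \sum_(0 <= j < 10) g j + \sum_(0 <= j < x) g (j %% 10).
Proof.
elim: q => [|q IH]; first by rewrite muln0 add0n mul0n.
rewrite (big_cat_nat (n := 10)); [|by []|lia].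
rewrite (big_addn 0 (10 * q.+1 + x) 10) /=.
rewrite (_ : 10 * q.+1 + x - 10 = 10 * q + x); last lia.
rewrite (eq_big_nat _ _ (F1 := fun j => g ((j + 10) %% 10)) (F2 := fun j => g (j %% 10))); last by move=> j _ /=; rewrite ?modnDr.
rewrite IH (eq_big_nat _ _ (F1 := fun j => g (j %% 10)) (F2 := g)); last first.
  by move=> j /andP [_ Hj]; rewrite modn_small.
by rewrite mulSn addnA.
Qed.

Definition PCs (m : nat) : nat := \sum_(0 <= r < 4) Pat r m.

Lemma colStd n j : n != 4 -> n != 5 -> j + 6 < n ->
  \sum_(0 <= r < 4) Fn n r j = (j == 0) + PCs (j %% 10).
Proof.
move=> /negbTE H4 /negbTE H5 Hj.
rewrite (eq_big_nat _ _ (F2 := fun r => Std r (j %% 10) (j == 0))); last first.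
  move=> r _; rewrite /Fn H4 H5 /Fcore (_ : minn (n - j.+1) 6 = 6) //; lia.
case: eqP => [->|_]; first by rewrite /PCs unlock.
by rewrite /PCs add0n.
Qed.

Lemma colEnd n i : 9 <= n -> i < 6 ->
  \sum_(0 <= r < 4) Fn n r (i + (n - 6)) =
  \sum_(0 <= r < 4) Fcore (n %% 10) r ((n %% 10 + 4 + i) %% 10) false (5 - i).
Proof.
move=> Hn Hi; apply: eq_big_nat => r _.
rewrite /Fn (_ : (n == 4) = false); last by apply/eqP; lia.
rewrite (_ : (n == 5) = false); last by apply/eqP; lia.
rewrite (_ : (i + (n - 6)) %% 10 = (n %% 10 + 4 + i) %% 10); last lia.
rewrite (_ : (i + (n - 6) == 0) = false); last by apply/eqP; lia.
by rewrite (_ : n - (i + (n - 6)).+1 = 5 - i); last lia.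
Qed.

Definition Eend (rho : nat) : nat :=
  \sum_(0 <= i < 6) \sum_(0 <= r < 4) Fcore rho r ((rho + 4 + i) %% 10) false (5 - i).

Lemma cost_gen_eq n : 9 <= n ->
  \sum_(0 <= j < n) \sum_(0 <= r < 4) Fn n r j =
  1 + (8 * ((n - 6) %/ 10) + \sum_(0 <= j < (n - 6) %% 10) PCs j) + Eend (n %% 10).
Proof.
move=> Hn.
rewrite (big_cat_nat (n := n - 6)); [|by []|lia].
rewrite (eq_big_nat _ _ (F2 := fun j => (j == 0) + PCs (j %% 10))); last first.
  by move=> j /andP [_ Hj]; apply: colStd; [apply/eqP; lia|apply/eqP; lia|lia].
rewrite big_split /=.
rewrite (eq_big_nat _ _ (F2 := fun j => (j == 0) * 1)); last by move=> j _; rewrite muln1.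
rewrite sum_pick (_ : 0 < n - 6); last lia.
rewrite mul1n [X in \sum_(0 <= i < X) PCs (i %% 10)](divn_eq (n - 6) 10) [(n - 6) %/ 10 * 10]mulnC periodic.
rewrite (eq_big_nat _ _ (F1 := fun j => PCs (j %% 10)) (F2 := PCs)); last first.
  by move=> j /andP [_ Hj]; rewrite modn_small // (leq_trans Hj) // ltnW // ltn_pmod.
rewrite (_ : \sum_(0 <= j < 10) PCs j = 8); last by rewrite /PCs unlock.
rewrite (big_addn 0 n (n - 6)) (_ : n - (n - 6) = 6); last lia.
rewrite (eq_big_nat _ _ (F1 := fun i => \sum_(0 <= r < 4) Fn n r (i + (n - 6))) (F2 := fun i => \sum_(0 <= r < 4)
     Fcore (n %% 10) r ((n %% 10 + 4 + i) %% 10) false (5 - i))); last first.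
  by move=> i /andP [_ Hi]; apply: colEnd.
by rewrite /Eend mulnC.
Qed.

Lemma partB_upper n : 4 <= n -> n %% 10 \in [:: 1; 4; 5; 9] ->
  gamma_b2 (@grid_adj n) <= 8 * (n %/ 10) + c_tab (n %% 10).
Proof.
move=> Hn Hrho.
have [->|H4] := eqVneq n 4.
  by apply: leq_trans (bigmin_fin_le _ _ small4.1) _; rewrite small4.2.
have [->|H5] := eqVneq n 5.
  by apply: leq_trans (bigmin_fin_le _ _ small5.1) _; rewrite small5.2.
have H9 : 9 <= n.
  by move: Hrho H4 H5; rewrite !inE => /or4P [] /eqP H /eqP H4' /eqP H5'; lia.
apply: leq_trans (bigmin_fin_le _ _ (gen_dom H9 Hrho)) _.
rewrite cost_fb cost_gen_eq //.
move: Hrho; rewrite !inE => /or4P [] /eqP H; rewrite H.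
- rewrite (_ : (n - 6) %% 10 = 5); last lia.
  rewrite (_ : Eend 1 = 5); last by rewrite /Eend unlock.
  rewrite (_ : \sum_(0 <= j < 5) PCs j = 4); last by rewrite /PCs unlock.
  rewrite /c_tab /=; lia.
- rewrite (_ : (n - 6) %% 10 = 8); last lia.
  rewrite (_ : Eend 4 = 5); last by rewrite /Eend unlock.
  rewrite (_ : \sum_(0 <= j < 8) PCs j = 6); last by rewrite /PCs unlock.
  rewrite /c_tab /=; lia.
- rewrite (_ : (n - 6) %% 10 = 9); last lia.
  rewrite (_ : Eend 5 = 6); last by rewrite /Eend unlock.
  rewrite (_ : \sum_(0 <= j < 9) PCs j = 6); last by rewrite /PCs unlock.
  rewrite /c_tab /=; lia.
- rewrite (_ : (n - 6) %% 10 = 3); last lia.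
  rewrite (_ : Eend 9 = 5); last by rewrite /Eend unlock.
  rewrite (_ : \sum_(0 <= j < 3) PCs j = 2); last by rewrite /PCs unlock.
  rewrite /c_tab /=; lia.
Qed.

Theorem corollary4p10 :
  (forall n : nat, 4 <= n ->
     8 * (n %/ 10) + c_tab (n %% 10) <= gamma_b2 (@grid_adj n)) /\
  (forall n : nat, 4 <= n -> n %% 10 \in [:: 1; 4; 5; 9] ->
     gamma_b2 (@grid_adj n) = 8 * (n %/ 10) + c_tab (n %% 10)).
Proof.
split; first exact: partA.
move=> n Hn Hrho; apply/eqP; rewrite eqn_leq partB_upper //=; exact: partA.
Qed.
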